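(* Let $i\in\omega$ and let $u\le_{\mathrm{lex}}v\le_{\mathrm{lex}}w\le_{\mathrm{lex}}z$ be mutually compatible words in $\Sigma^*$, all of length $i$. 1. If $v\prec w$, then (a) at least one of $u\prec w$ and $u\perp v$ holds, and (b) at least one of $v\prec z$ and $w\perp z$ holds. 2. If $u\perp z$ and $u<_{\mathrm{lex}}v<_{\mathrm{lex}}z$, then at least one of $u\perp v$ and $v\perp z$ holds.
   Context: $\Sigma=\{\mathrm L,\mathrm X,\mathrm R\}$ ordered $\mathrm L<_{\mathrm{lex}}\mathrm X<_{\mathrm{lex}}\mathrm R$; $\Sigma^*$ is the set of finite words over $\Sigma$ (characters indexed from $0$), $\le_{\mathrm{lex}}$ the lexicographic order, $|w|$ the length. For $w,w'\in\Sigma^*$: $w\prec w'$ iff there is $i<\min(|w|,|w'|)$ with $(w_i,w'_i)=(\mathrm L,\mathrm R)$ and $w_j\le_{\mathrm{lex}}w'_j$ for all $j<i$. $w\perp w'$ iff there are $i,j<\min(|w|,|w'|)$ with $w_i<_{\mathrm{lex}}w'_i$ and $w'_j<_{\mathrm{lex}}w_j$. Words $u\le_{\mathrm{lex}}v$ are compatible if there is no $i<\min(|u|,|v|)$ with $(u_i,v_i)=(\mathrm R,\mathrm L)$, and, if there exists $j<\min(|u|,|v|)$ with $(u_j,v_j)=(\mathrm L,\mathrm R)$, then $u\prec v$ and $u\not\perp v$. *)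

(* Defs.v *)
From HB Require Import structures.
From mathcomp Require Import all_boot.
Set Implicit Arguments. Unset Strict Implicit. Unset Printing Implicit Defensive.

Inductive letter := L | X | R.

Definition rank (a : letter) : nat := match a with L => 0 | X => 1 | R => 2 end.

Definition letter_eqb (a b : letter) : bool := rank a == rank b.
Lemma letter_eqP : Equality.axiom letter_eqb.
Proof. by case; case; constructor. Qed.
HB.instance Definition _ := hasDecEq.Build letter letter_eqP.

Definition ltl (a b : letter) : bool := rank a < rank b.
Definition lel (a b : letter) : bool := rank a <= rank b.

Definition word := seq letter.

Fixpoint lelex (w w' : word) : bool :=
  match w, w' with
  | [::], _ => true
  | _ :: _, [::] => false
  | a :: s, b :: t => ltl a b || ((a == b) && lelex s t)
  end.

Definition ltlex (w w' : word) : bool := lelex w w' && (w != w').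

Definition prec (w w' : word) : Prop :=
  exists i, i < minn (size w) (size w') /\
    nth L w i = L /\ nth L w' i = R /\
    (forall j, j < i -> lel (nth L w j) (nth L w' j)).

Definition perp (w w' : word) : Prop :=
  exists i j, i < minn (size w) (size w') /\ j < minn (size w) (size w') /\
    ltl (nth L w i) (nth L w' i) /\ ltl (nth L w' j) (nth L w j).

Definition compatible (u v : word) : Prop :=
  lelex u v /\
  (forall i, i < minn (size u) (size v) -> ~ (nth L u i = R /\ nth L v i = L)) /\
  ((exists j, j < minn (size u) (size v) /\ nth L u j = L /\ nth L v j = R) ->
     prec u v /\ ~ perp u v).

(* Main.v *)
Require Import Defs.
From mathcomp Require Import all_boot.

Lemma lelex_lt (a b : word) : size a = size b -> lelex a b -> a <> b ->
  exists i, i < size a /\ ltl (nth L a i) (nth L b i).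
Proof.
elim: a b => [|x s IH] [|y t] //=.
move=> [Hs] /orP [Hl|/andP [/eqP Exy Hst]] Hne.
  by exists 0.
have Hst' : s <> t by move=> E; apply: Hne; rewrite Exy E.
have [k [Hk Hl]] := IH t Hs Hst Hst'.
by exists k.+1.
Qed.

Lemma pw_dec (a b : word) n : (forall j, j < n -> lel (nth L a j) (nth L b j)) \/
  exists j, j < n /\ ltl (nth L b j) (nth L a j).
Proof.
elim: n => [|n [IH|[j [Hj Hl]]]].
- by left.
- case: (leqP (rank (nth L a n)) (rank (nth L b n))) => H.
    left=> j; rewrite ltnS leq_eqVlt => /orP [/eqP ->|Hj]; [exact H| exact: IH].
  by right; exists n.
- by right; exists j; split => //; apply: ltnW.
Qed.

Lemma trich (a b : word) : size a = size b -> lelex a b ->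
  a = b \/ (forall j, j < size a -> lel (nth L a j) (nth L b j)) \/ perp a b.
Proof.
move=> Hs Hle.
case: (pw_dec a b (size a)) => [H|[j [Hj Hl]]]; first by right; left.
case: (altP (a =P b)) => [->|/eqP Hne]; first by left.
have [i [Hi Hl']] := @lelex_lt a b Hs Hle Hne.
right; right; exists i, j; rewrite -Hs minnn; by [].
Qed.

Lemma lel_trans a b c : lel a b -> lel b c -> lel a c.
Proof. rewrite /lel; exact: leq_trans. Qed.

Theorem proposition1 (i : nat) (u v w z : word) :
  size u = i -> size v = i -> size w = i -> size z = i ->
  lelex u v -> lelex v w -> lelex w z ->
  compatible u v -> compatible u w -> compatible u z ->
  compatible v w -> compatible v z -> compatible w z ->
  (prec v w -> (prec u w \/ perp u v) /\ (prec v z \/ perp w z)) /\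
  (perp u z -> ltlex u v -> ltlex v z -> perp u v \/ perp v z).
Proof.
move=> Su Sv Sw Sz Huv Hvw Hwz _ _ _ _ _ _.
split.
- move=> Hp; split.
  + case: (@trich u v (etrans Su (esym Sv)) Huv) => [E|[Hpw|Hpe]].
    * by left; rewrite E.
    * left; move: Hp => [k [Hk [Hvk [Hwk Hj]]]].
      rewrite Sv Sw minnn in Hk.
      exists k; rewrite Su Sw minnn; split => //; split; last split => //.
        have := Hpw k; rewrite Su => /(_ Hk); rewrite Hvk /lel.
        by case: (nth L u k).
      move=> j Hjk; apply: (@lel_trans _ _ _ _ (Hj j Hjk)).
      apply: Hpw; rewrite Su; exact: ltn_trans Hk.
    * by right.
  + case: (@trich w z (etrans Sw (esym Sz)) Hwz) => [E|[Hpw|Hpe]].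
    * by left; rewrite -E.
    * left; move: Hp => [k [Hk [Hvk [Hwk Hj]]]].
      rewrite Sv Sw minnn in Hk.
      exists k; rewrite Sv Sz minnn; split => //; split => //; split.
        have := Hpw k; rewrite Sw => /(_ Hk); rewrite Hwk /lel.
        by case: (nth L z k).
      move=> j Hjk; apply: (@lel_trans _ _ _ (Hj j Hjk)).
      apply: Hpw; rewrite Sw; exact: ltn_trans Hk.
    * by right.
- move=> [a [b [Ha [Hb [Hla Hlb]]]]] /andP [Huv' Hne1] /andP [Hvz Hne2].
  case: (@trich u v (etrans Su (esym Sv)) Huv') => [E|[P1|]]; first by rewrite E eqxx in Hne1.
  2: by left.
  case: (@trich v z (etrans Sv (esym Sz)) Hvz) => [E|[P2|]]; first by rewrite E eqxx in Hne2.
  2: by right.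
  exfalso.
  rewrite Su Sz minnn in Hb.
  have H1 := P1 b; have H2 := P2 b.
  rewrite Su in H1; rewrite Sv in H2.
  move: (@lel_trans _ _ _ (H1 Hb) (H2 Hb)) Hlb; rewrite /lel /ltl.
  by rewrite leqNgt => /negP.
Qed.
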